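(* Let $w\ge 0$ and let $\mathcal{B}$ be a class of graphs such that $\operatorname{tw}(L(B))\le w$ for every $B\in\mathcal{B}$. Let $\mathcal{C}$ be the class of graphs obtained from graphs in $\mathcal{B}$ by successively applying the bridge operation, i.e., the smallest class containing $\mathcal{B}$ such that whenever $G_1,G_2\in\mathcal{C}$ (taken vertex-disjoint) and $v_1\in V(G_1)$, $v_2\in V(G_2)$ have neighborhoods $N(v_1)=\{x_1,y_1,z_1\}$, $N(v_2)=\{x_2,y_2,z_2\}$, the graph $(G_1-v_1)\cup(G_2-v_2)+x_1x_2+y_1y_2+z_1z_2$ belongs to $\mathcal{C}$. Then every $G\in\mathcal{C}$ satisfies $\operatorname{tw}(G)\le 2w+1$.
   Context: $\operatorname{tw}(H)$ denotes the treewidth of a graph $H$. The line graph $L(F)$ of a graph $F$ is the graph with vertex set $E(F)$ in which two vertices are adjacent exactly when the corresponding edges share an endvertex in $F$. *)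

(* Defs.v *)
From HB Require Import structures.
From mathcomp Require Import all_boot.

Set Implicit Arguments.
Unset Strict Implicit.
Unset Printing Implicit Defensive.

Record sgraph := SGraph {
  vtx : finType;
  adj : rel vtx;
  adj_sym : symmetric adj;
  adj_irr : irreflexive adj }.
Arguments adj : clear implicits.

Definition is_tree (I : finType) (t : rel I) : Prop :=
  [/\ 0 < #|I|, symmetric t, irreflexive t,
      forall a b : I, connect t a b &
      forall s : seq I, uniq s -> 2 < size s -> ~~ cycle t s].

Definition tw_le (G : sgraph) (k : nat) : Prop :=
  exists (I : finType) (t : rel I) (bag : I -> {set vtx G}),
    [/\ is_tree t,
        forall x : vtx G, exists i, x \in bag i,
        forall x y : vtx G, adj G x y -> exists i, (x \in bag i) && (y \in bag i),
        forall (x : vtx G) (i j : I), x \in bag i -> x \in bag j ->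
          connect [rel a b | [&& t a b, x \in bag a & x \in bag b]] i j &
        forall i, #|bag i| <= k.+1].

Definition is_edge (G : sgraph) (e : {set vtx G}) : bool :=
  [exists x, exists y, adj G x y && (e == [set x; y])].

Arguments is_edge : clear implicits.

Definition ledge (G : sgraph) := {e : {set vtx G} | is_edge G e}.

Definition line_adj (G : sgraph) : rel (ledge G) :=
  fun e f => (e != f) && (val e :&: val f != set0).

Lemma line_adj_sym (G : sgraph) : symmetric (@line_adj G).
Proof. by move=> e f; rewrite /line_adj eq_sym setIC. Qed.

Lemma line_adj_irr (G : sgraph) : irreflexive (@line_adj G).
Proof. by move=> e; rewrite /line_adj eqxx. Qed.

Definition line_graph (G : sgraph) : sgraph :=
  @SGraph (ledge G) (@line_adj G) (@line_adj_sym G) (@line_adj_irr G).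

Section Bridge.
Variables (G1 G2 : sgraph) (v1 : vtx G1) (v2 : vtx G2)
          (x1 y1 z1 : vtx G1) (x2 y2 z2 : vtx G2).

Definition bvtx : finType :=
  ({x : vtx G1 | x != v1} + {x : vtx G2 | x != v2})%type.

Definition cross (a : vtx G1) (b : vtx G2) : bool :=
  [|| (a == x1) && (b == x2), (a == y1) && (b == y2) | (a == z1) && (b == z2)].

Definition badj : rel bvtx := fun u w =>
  match u, w with
  | inl a, inl b => adj G1 (val a) (val b)
  | inr a, inr b => adj G2 (val a) (val b)
  | inl a, inr b => cross (val a) (val b)
  | inr a, inl b => cross (val b) (val a)
  end.

Lemma badj_sym : symmetric badj.
Proof. by case=> a [] b //=; apply: adj_sym. Qed.

Lemma badj_irr : irreflexive badj.
Proof. by case=> a /=; rewrite adj_irr. Qed.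

Definition bridge : sgraph := @SGraph bvtx badj badj_sym badj_irr.
End Bridge.

Definition nbhd3 (G : sgraph) (v x y z : vtx G) : Prop :=
  [set u | adj G v u] = [set x; y; z] /\ uniq [:: x; y; z].

Inductive bridge_closure (B : sgraph -> Prop) : sgraph -> Prop :=
| bc_base G : B G -> bridge_closure B G
| bc_bridge (G1 G2 : sgraph) (v1 : vtx G1) (v2 : vtx G2)
    (x1 y1 z1 : vtx G1) (x2 y2 z2 : vtx G2) :
    bridge_closure B G1 -> bridge_closure B G2 ->
    nbhd3 v1 x1 y1 z1 -> nbhd3 v2 x2 y2 z2 ->
    bridge_closure B (bridge v1 v2 x1 y1 z1 x2 y2 z2).

(* Main.v *)
Require Import Defs.
From mathcomp Require Import all_boot.
From mathcomp Require Import zify.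

Set Implicit Arguments.
Unset Strict Implicit.
Unset Printing Implicit Defensive.


Lemma lift_conn (T U : finType) (r : rel T) (r' : rel U) (f : T -> U) :
  (forall a b, r a b -> r' (f a) (f b)) ->
  forall x y, connect r x y -> connect r' (f x) (f y).
Proof.
move=> H x y /connectP [p Hp ->]; elim: p x Hp => [|z p IH] x /=.
  by rewrite connect0.
case/andP=> Hxz Hp; exact: connect_trans (connect1 (H _ _ Hxz)) (IH _ Hp).
Qed.

Lemma path_avoid_conn (T : finType) (r r' : rel T) (P : pred T) x s :
  (forall a b, P a -> P b -> r a b -> r' a b) ->
  all P (x :: s) -> path r x s -> connect r' x (last x s).
Proof.
move=> H; elim: s x => [|z s IH] x /=; first by rewrite connect0.
case/and3P=> Px Pz Ps /andP [rxz Hs].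
apply: connect_trans (connect1 (H _ _ Px Pz rxz)) _.
by apply: IH => //=; rewrite Pz.
Qed.

Lemma path_all_snd (T : Type) (r : rel T) (P : pred T) x s :
  (forall a b, r a b -> P b) -> path r x s -> all P s.
Proof.
move=> H; elim: s x => [|z s IH] x //= /andP [rxz Hs].
by rewrite (H _ _ rxz) (IH _ Hs).
Qed.

Lemma notin_all (T : eqType) (p : T) s : p \notin s -> all (fun x => x != p) s.
Proof.
move=> H; apply/allP => x Hx; apply/eqP => E; by rewrite -E Hx in H.
Qed.

Section TreeFacts.
Variables (I : finType) (t : rel I).
Hypothesis ht : is_tree t.

Definition Tm (p : I) : rel I := fun a b => [&& t a b, a != p & b != p].

Lemma Tm_sym p : symmetric (Tm p).
Proof.
case: ht => _ tsym _ _ _ x y; rewrite /Tm tsym.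
by case: (x != p); case: (y != p); rewrite ?andbF ?andbT.
Qed.

Lemma sep p a b : t p a -> t p b -> a != b -> connect (Tm p) a b -> False.
Proof.
case: ht => _ tsym tirr _ acyc tpa tpb nab /connectP [s Hs Hl].
move: Hl; case/shortenP: Hs => s' Hs' Hu _ Hl.
have Hall : all (fun x => x != p) s'.
  by apply: (path_all_snd (r := Tm p)) Hs' => u v /and3P [].
have nap : a != p by apply/eqP => E; rewrite E tirr in tpa.
have ns' : s' != [::] by case: s' {Hs' Hu Hall} Hl => //= E; rewrite E eqxx in nab.
have U : uniq (p :: a :: s').
  rewrite cons_uniq Hu andbT inE eq_sym negb_or nap /=; apply/negP => Hin.
  by move/allP: Hall => /(_ _ Hin); rewrite eqxx.
have S : 2 < size (p :: a :: s') by case: s' ns' {Hs' Hu Hall Hl U}.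
move/negP: (acyc _ U S); apply.
rewrite /cycle rcons_path /= tpa -Hl tsym tpb andbT.
by apply: (sub_path _ Hs') => u v /and3P [].
Qed.
End TreeFacts.


Section Helly.
Variables (I : finType) (t : rel I).
Hypothesis ht : is_tree t.
Variables (A B C : pred I).
Let RA := [rel a b | [&& t a b, A a & A b]].
Let RB := [rel a b | [&& t a b, B a & B b]].
Let RC := [rel a b | [&& t a b, C a & C b]].
Hypothesis cA : forall i j, A i -> A j -> connect RA i j.
Hypothesis cB : forall i j, B i -> B j -> connect RB i j.
Hypothesis cC : forall i j, C i -> C j -> connect RC i j.

Lemma helly p q r : A p -> B p -> A q -> C q -> B r -> C r ->
  exists c, [&& A c, B c & C c].
Proof.
move=> Ap Bp Aq Cq Br Cr.
have tsym : symmetric t by case: ht.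
suff aux : forall n p s, A p -> B p -> path RA p s -> uniq (p :: s) ->
    last p s = q -> size s <= n -> exists c, [&& A c, B c & C c].
  move/connectP: (cA Ap Aq) => [s Hs Hl].
  move: Hl; case/shortenP: Hs => s' Hs' Hu _ Hl.
  exact: (aux (size s') p s' Ap Bp Hs' Hu (esym Hl)).
elim=> [|n IH] p0 [|a1 s] Ap0 Bp0 Hs Hu Hl Hsz //.
- by exists p0; rewrite Ap0 Bp0 /=; move: Cq; rewrite -Hl.
- by exists p0; rewrite Ap0 Bp0 /=; move: Cq; rewrite -Hl.
case Cp0 : (C p0); first by exists p0; rewrite Ap0 Bp0 Cp0.
move/connectP: (cB Bp0 Br) => [u Hu0 Hlu].
move: Hlu; case/shortenP: Hu0 => u' Hu' Huu _ Hlu.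
case: u' Hu' Huu Hlu => [|b1 u''] Hu' Huu Hlu.
  by rewrite Hlu Cp0 in Cr.
move: Hs Hu Hu' Huu => /= /andP [/and3P [tpa _ Aa1] Hs] /andP [Hpn Hu]
  /andP [/and3P [tpb _ Bb1] Hu'] /andP [Hpn' Hu2].
have C1 : connect (Tm t p0) a1 q.
  rewrite -Hl.
  apply: (path_avoid_conn (P := fun x => x != p0)) Hs.
    by move=> x y Px Py /and3P [txy _ _]; rewrite /Tm txy Px Py.
  by apply: notin_all.
have C2 : connect (Tm t p0) b1 r.
  rewrite Hlu.
  apply: (path_avoid_conn (P := fun x => x != p0)) Hu'.
    by move=> x y Px Py /and3P [txy _ _]; rewrite /Tm txy Px Py.
  by apply: notin_all.
have C3 : connect (Tm t p0) q r.
  apply: connect_sub (cC Cq Cr) => x y /and3P [txy Cx Cy]; apply: connect1.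
  rewrite /Tm txy /=; apply/andP; split; apply/negP => /eqP E; [move: Cx | move: Cy]; by rewrite E Cp0.
have C4 : connect (Tm t p0) a1 b1.
  apply: connect_trans C1 (connect_trans C3 _).
  by rewrite (sym_connect_sym (Tm_sym ht p0)).
case: (eqVneq a1 b1) => [E|N]; last by case: (sep ht tpa tpb N C4).
apply: (IH a1 s) => //; first by rewrite E.
Qed.
End Helly.


Section Join.
Variables (I1 I2 : finType) (t1 : rel I1) (t2 : rel I2) (i1 : I1) (i2 : I2).
Hypotheses (ht1 : is_tree t1) (ht2 : is_tree t2).

Definition jrel : rel (I1 + I2) := fun u v =>
  match u, v with
  | inl a, inl b => t1 a b
  | inr a, inr b => t2 a b
  | inl a, inr b => (a == i1) && (b == i2)
  | inr b, inl a => (a == i1) && (b == i2)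
  end.

Definition isl (u : I1 + I2) := if u is inl _ then true else false.

Lemma path_inl x s : path jrel (inl x) (map inl s) = path t1 x s.
Proof. by elim: s x => [|y s IH] x //=; rewrite IH. Qed.
Lemma path_inr x s : path jrel (inr x) (map inr s) = path t2 x s.
Proof. by elim: s x => [|y s IH] x //=; rewrite IH. Qed.

Lemma all_inl s : all isl s -> exists s', s = map inl s'.
Proof.
elim: s => [|[a|b] s IH] /=; first by exists [::].
  by move/IH => [s' ->]; exists (a :: s').
by [].
Qed.
Lemma all_inr s : all (fun u => ~~ isl u) s -> exists s', s = map inr s'.
Proof.
elim: s => [|[a|b] s IH] /=; first by exists [::].
  by [].
by move/IH => [s' ->]; exists (b :: s').
Qed.

Lemma no_cyc_l s : all isl s -> uniq s -> 2 < size s -> cycle jrel s -> False.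
Proof.
move/all_inl => [s' ->]; rewrite (map_inj_uniq (@inl_inj _ _)) size_map => U S.
case: ht1 => _ _ _ _ H; move: (H s' U S) => /negP N C; apply: N; move: C.
case: s' {U S} => [|x s'] //=.
by rewrite -(map_rcons inl) path_inl.
Qed.
Lemma no_cyc_r s : all (fun u => ~~ isl u) s -> uniq s -> 2 < size s ->
  cycle jrel s -> False.
Proof.
move/all_inr => [s' ->]; rewrite (map_inj_uniq (@inr_inj _ _)) size_map => U S.
case: ht2 => _ _ _ _ H; move: (H s' U S) => /negP N C; apply: N; move: C.
case: s' {U S} => [|x s'] //=.
by rewrite -(map_rcons inr) path_inr.
Qed.

Lemma side_step u v : jrel u v -> u != inl i1 -> v != inl i1 -> isl v = isl u.
Proof.
case: u => a; case: v => b //=.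
- by case/andP => /eqP ->; rewrite eqxx.
- by case/andP => /eqP -> _ ; rewrite eqxx.
Qed.

Lemma side x s : path jrel x s -> inl i1 \notin x :: s ->
  all (fun y => isl y == isl x) s.
Proof.
elim: s x => [|y s IH] x //= /andP [jxy Hs].
rewrite !inE !negb_or => /and3P [nx ny ns].
rewrite eq_sym in nx; rewrite eq_sym in ny.
have E := side_step jxy nx ny.
rewrite E eqxx /=.
move: (IH y Hs); rewrite inE negb_or eq_sym ny ns => /(_ isT).
by rewrite E.
Qed.

Lemma join_tree : is_tree jrel.
Proof.
have [c1 s1 ir1 cn1 _] := ht1; have [c2 s2 ir2 cn2 _] := ht2.
split.
- by rewrite card_sum addn_gt0 c1.
- by case=> a [] b /=; first [apply: s1 | apply: s2 | done].
- by case=> a /=; rewrite ?ir1 ?ir2.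
- have Hl : forall a b, connect jrel (inl a) (inl b).
    by move=> a b; apply: (lift_conn (r := t1)) => //; apply: cn1.
  have Hr : forall a b, connect jrel (inr a) (inr b).
    by move=> a b; apply: (lift_conn (r := t2)) => //; apply: cn2.
  have Hlr : forall a b, connect jrel (inl a) (inr b).
    move=> a b; apply: connect_trans (Hl a i1) _.
    apply: connect_trans (Hr i2 b).
    by apply: connect1; rewrite /= !eqxx.
  have js : symmetric jrel by case=> a [] b /=; first [apply: s1 | apply: s2 | done].
  case=> a [] b //; rewrite (sym_connect_sym js); exact: Hlr.
- move=> s U S; apply/negP => C.
  case: (boolP (inl i1 \in s)) => Hin.
    case: (rot_to Hin) => k s' E.
    move: U S C; rewrite -(rot_uniq k) -(size_rot k) -(rot_cycle k) E.
    case: s' {E Hin} => [|y p] //= U S.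
    case/andP => j1; rewrite rcons_path => /andP [Hp jl].
    have nin : inl i1 \notin y :: p by case/andP: U.
    have sd := side Hp nin.
    case: y j1 jl sd nin U S Hp => [a|b] j1 jl sd nin U S Hp.
      apply: (@no_cyc_l (inl i1 :: inl a :: p)) => //=.
      + apply/allP => u Hu; move/allP: sd => /(_ u Hu) /eqP -> //.
      + by rewrite /cycle rcons_path /= j1 Hp jl.
    move: j1 => /= /andP [_ /eqP Eb]; subst b.
    case: p sd nin U S Hp jl => [|z p] // sd nin U S Hp jl.
    have Hm := mem_last z p.
    have Hsd : isl (last z p) == isl (inr i2 : I1 + I2) := allP sd _ Hm.
    have Hlast : last z p = inr i2.
      move: Hsd jl => /=; case: (last z p) => [a|c] //= _ /andP [_ /eqP ->] //.
    have Hin2 : inr i2 \in z :: p by rewrite -Hlast.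
    move: U => /= /andP [_ /andP [/negP N _]]; apply: N; exact: Hin2.
  case: s U S C Hin => [|x p] // U S C0.
  have := C0; rewrite /cycle rcons_path => /andP [Hp _] Hin.
  have sd := side Hp Hin.
  case Hx : (isl x).
    apply: (@no_cyc_l (x :: p) _ U S C0).
    rewrite /= Hx /=; apply/allP => u Hu; move/allP: sd => /(_ u Hu) /eqP ->; exact Hx.
  apply: (@no_cyc_r (x :: p) _ U S C0).
  rewrite /= Hx /=; apply/allP => u Hu; move/allP: sd => /(_ u Hu) /eqP ->; by rewrite Hx.
Qed.
End Join.


Definition No3 (T : finType) (S : {set T}) :=
  forall a b c, a \in S -> b \in S -> c \in S -> [|| a == b, b == c | a == c].

Inductive Q (w : nat) (G : sgraph) (X : {set vtx G}) : Prop :=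
  QI (I : finType) (t : rel I) (E : finType) (ends : E -> {set vtx G})
     (bag : I -> {set E}) of
    is_tree t
  & (forall e, No3 (ends e))
  & (forall x, x \notin X -> exists e, x \in ends e)
  & (forall x e, x \in X -> x \notin ends e)
  & (forall x y, adj G x y -> exists e, (x \in ends e) && (y \in ends e))
  & (forall e f x, x \in ends e -> x \in ends f -> exists i, (e \in bag i) && (f \in bag i))
  & (forall e i j, e \in bag i -> e \in bag j ->
       connect [rel a b | [&& t a b, e \in bag a & e \in bag b]] i j)
  & (forall i, #|bag i| <= w.+1).

Arguments Q : clear implicits.

Lemma No3_card (T : finType) (S : {set T}) : No3 S -> #|S| <= 2.
Proof.
move=> H; rewrite leqNgt; apply/negP => /card_gt2P [x [y [z [[hx hy hz] [n1 n2 n3]]]]].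
have := H x y z hx hy hz.
by rewrite (negPf n1) (negPf n2) eq_sym (negPf n3).
Qed.

Lemma card_bigcup_le (T E : finType) (S : {set E}) (F : E -> {set T}) :
  #|\bigcup_(e in S) F e| <= \sum_(e in S) #|F e|.
Proof.
apply: (big_ind2 (fun (A : {set T}) n => #|A| <= n)) => //.
- by rewrite cards0.
- move=> A1 n1 A2 n2 h1 h2; rewrite cardsU.
  apply: leq_trans (leq_subr _ _) _; exact: leq_add.
Qed.

Lemma Q_tw w G : Q w G set0 -> tw_le G (2 * w + 1).
Proof.
case=> I t E ends bag ht h3 hcov _ hadj hint hconn hsz.
exists I, t, (fun i => \bigcup_(e in bag i) ends e); split => //.
- move=> x; have [e he] : exists e, x \in ends e by apply: hcov; rewrite inE.
  have [i /andP [hi _]] := hint e e x he he.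
  by exists i; apply/bigcupP; exists e.
- move=> x y /hadj [e /andP [hx hy]].
  have [i /andP [hi _]] := hint e e x hx hx.
  by exists i; apply/andP; split; apply/bigcupP; exists e.
- move=> x i j /bigcupP [e hei hxe] /bigcupP [f hfj hxf].
  have [k /andP [hek hfk]] := hint e f x hxe hxf.
  have sub : forall g, x \in ends g -> forall a b,
      [&& t a b, g \in bag a & g \in bag b] ->
      [&& t a b, x \in \bigcup_(e in bag a) ends e & x \in \bigcup_(e in bag b) ends e].
    move=> g hg a b /and3P [tab ga gb]; rewrite tab /=.
    by apply/andP; split; apply/bigcupP; exists g.
  apply: connect_trans.
    by apply: (lift_conn (f := id) (sub e hxe)); apply: hconn hei hek.
  by apply: (lift_conn (f := id) (sub f hxf)); apply: hconn hfk hfj.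
- move=> i; apply: leq_trans (card_bigcup_le _ _) _.
  apply: (@leq_trans (\sum_(e in bag i) 2)).
    by apply: leq_sum => e _; apply: No3_card.
  rewrite sum_nat_const.
  have := hsz i; lia.
Qed.


Lemma mkedge_proof (H : sgraph) (x y : vtx H) : adj H x y -> is_edge H [set x; y].
Proof. by move=> h; apply/existsP; exists x; apply/existsP; exists y; rewrite h eqxx. Qed.

Lemma Q_base w H : tw_le (line_graph H) w ->
  Q w H [set x | [forall y, ~~ adj H x y]].
Proof.
case=> I [t [bag [ht hcov hedge hconn hsz]]].
apply: (@QI w H _ I t (ledge H) (fun e => val e) bag) => //.
- move=> e a b c; case/existsP: (valP e) => x /existsP [y /andP [_ /eqP ->]].
  by rewrite !inE => /orP [] /eqP -> /orP [] /eqP -> /orP [] /eqP ->; rewrite ?eqxx ?orbT.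
- move=> x; rewrite inE negb_forall => /existsP [y]; rewrite negbK => hxy.
  by exists (exist (fun e => is_edge H e) _ (mkedge_proof hxy) : ledge H); rewrite /= set21.
- move=> x e; rewrite inE => /forallP hx.
  case/existsP: (valP e) => a /existsP [b /andP [hab /eqP ->]].
  rewrite !inE; apply/negP => /orP [] /eqP E; subst.
    by move: (hx b); rewrite hab.
  by move: (hx a); rewrite adj_sym hab.
- move=> x y hxy; exists (exist (fun e => is_edge H e) _ (mkedge_proof hxy) : ledge H).
  by rewrite /= set21 set22.
- move=> e f x hxe hxf.
  case: (eqVneq e f) => [<-|nef].
    have [i hi] := hcov e; by exists i; rewrite hi.
  apply: hedge; rewrite /= /line_adj nef /=.
  by apply/set0Pn; exists x; rewrite inE hxe hxf.
Qed.

Section Leaf.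
Definition tu : rel unit := fun _ _ => false.
Lemma tu_tree : is_tree tu.
Proof.
split => //; first by rewrite card_unit.
- by move=> [] [].
- by move=> [|[] [|[] s]] //=; rewrite inE eqxx.
Qed.
End Leaf.

Lemma Q_leaf w G X x : Q w G X -> x \in X -> Q w G (X :\ x).
Proof.
case=> I t E ends bag ht h3 hcov hX hadj hint hconn hsz xX.
have [i0 _] : exists i0 : I, i0 \in I by apply/card_gt0P; case: ht.
pose ends' (e : E + unit) := if e is inl e' then ends e' else [set x].
pose bag' (i : I + unit) : {set E + unit} :=
  if i is inl i' then inl @: bag i' else [set inr tt].
apply: (@QI w G (X :\ x) (I + unit)%type (jrel t tu i0 tt) (E + unit)%type ends' bag').
- exact: join_tree ht tu_tree.
- case=> [e|[]] /=; first exact: h3.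
  by move=> a b c; rewrite !inE => /eqP -> /eqP -> /eqP ->; rewrite eqxx.
- move=> y; rewrite !inE negb_and negbK.
  case: (eqVneq y x) => [->|nyx] /= H; first by exists (inr tt); rewrite /= inE.
  by have [e he] := hcov y H; exists (inl e).
- move=> y [e|[]]; rewrite !inE => /andP [nyx yX] /=; first exact: hX.
  by [].                                       
- by move=> a b /hadj [e he]; exists (inl e).
- have Hl : forall i e, (inl e \in bag' i) = if i is inl i' then e \in bag i' else false.
    move=> [i|[]] e /=; first by rewrite mem_imset //; move=> ? ? [].
    by rewrite inE.
  have Hr : forall i, (inr tt \in bag' i) = if i is inr _ then true else false.
    move=> [i|[]] /=; last by rewrite inE.
    by apply/negP => /imsetP [? _].
  move=> [e|[]] [f|[]] y /= hy1 hy2.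
  + by have [i hi] := hint e f y hy1 hy2; exists (inl i); rewrite !Hl.
  + by move: hy2; rewrite inE => /eqP Ey; subst y; move: (hX _ e xX); rewrite hy1.
  + by move: hy1; rewrite inE => /eqP Ey; subst y; move: (hX _ f xX); rewrite hy2.
  + by exists (inr tt); rewrite Hr.
- have Hl : forall i e, (inl e \in bag' i) = if i is inl i' then e \in bag i' else false.
    move=> [i|[]] e /=; first by rewrite mem_imset //; move=> ? ? [].
    by rewrite inE.
  have Hr : forall i, (inr tt \in bag' i) = if i is inr _ then true else false.
    move=> [i|[]] /=; last by rewrite inE.
    by apply/negP => /imsetP [? _].
  move=> [e|[]] [i|[]] [j|[]]; rewrite ?Hl ?Hr // => hi hj.
  + apply: (lift_conn (r := [rel a b | [&& t a b, e \in bag a & e \in bag b]])).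
      by move=> a b /and3P [tab ha hb]; apply/and3P; split; rewrite ?Hl.
    exact: hconn.
- move=> [i|[]] /=; first by apply: leq_trans (leq_imset_card _ _) (hsz i).
  by rewrite cards1.
Qed.


Lemma other (T : finType) (S : {set T}) v x a :
  No3 S -> v \in S -> x \in S -> v != x -> a \in S -> a != v -> a = x.
Proof.
move=> h hv hx nvx ha nav; have := h v x a hv hx ha.
by rewrite (negPf nvx) /= [v == a]eq_sym (negPf nav) orbF eq_sym => /eqP.
Qed.

Lemma nbhd_facts (G : sgraph) (v x y z : vtx G) : nbhd3 v x y z ->
  [/\ adj G v x, adj G v y, adj G v z & [/\ x != y, y != z & x != z]].
Proof.
case=> hN hu.
have H : forall u, u \in [set x; y; z] -> adj G v u by move=> u; rewrite -hN inE.
split; try (apply: H; rewrite !inE eqxx ?orbT //).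
by move: hu; rewrite /= !inE !negb_or => /andP [/andP [-> ->] /andP [-> _]].
Qed.

Lemma adj_neq (G : sgraph) (a b : vtx G) : adj G a b -> a != b.
Proof. by move=> h; apply/eqP => E; rewrite E adj_irr in h. Qed.


Section BridgeQ.
Variables (w : nat) (G1 G2 : sgraph) (v1 : vtx G1) (v2 : vtx G2)
  (x1 y1 z1 : vtx G1) (x2 y2 z2 : vtx G2).
Hypotheses (nb1 : nbhd3 v1 x1 y1 z1) (nb2 : nbhd3 v2 x2 y2 z2).
Variables (I1 : finType) (t1 : rel I1) (E1 : finType) (ends1 : E1 -> {set vtx G1})
  (bag1 : I1 -> {set E1}).
Hypotheses (ht1 : is_tree t1) (h31 : forall e, No3 (ends1 e))
  (hcov1 : forall x, exists e, x \in ends1 e)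
  (hadj1 : forall x y, adj G1 x y -> exists e, (x \in ends1 e) && (y \in ends1 e))
  (hint1 : forall e f x, x \in ends1 e -> x \in ends1 f -> exists i, (e \in bag1 i) && (f \in bag1 i))
  (hconn1 : forall e i j, e \in bag1 i -> e \in bag1 j ->
       connect [rel a b | [&& t1 a b, e \in bag1 a & e \in bag1 b]] i j)
  (hsz1 : forall i, #|bag1 i| <= w.+1).
Variables (I2 : finType) (t2 : rel I2) (E2 : finType) (ends2 : E2 -> {set vtx G2})
  (bag2 : I2 -> {set E2}).
Hypotheses (ht2 : is_tree t2) (h32 : forall e, No3 (ends2 e))
  (hcov2 : forall x, exists e, x \in ends2 e)
  (hadj2 : forall x y, adj G2 x y -> exists e, (x \in ends2 e) && (y \in ends2 e))
  (hint2 : forall e f x, x \in ends2 e -> x \in ends2 f -> exists i, (e \in bag2 i) && (f \in bag2 i))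
  (hconn2 : forall e i j, e \in bag2 i -> e \in bag2 j ->
       connect [rel a b | [&& t2 a b, e \in bag2 a & e \in bag2 b]] i j)
  (hsz2 : forall i, #|bag2 i| <= w.+1).
Variables (ex1 ey1 ez1 : E1) (i1 : I1) (ex2 ey2 ez2 : E2) (i2 : I2).
Hypotheses (vx1 : v1 \in ends1 ex1) (xx1 : x1 \in ends1 ex1)
  (vy1 : v1 \in ends1 ey1) (yy1 : y1 \in ends1 ey1)
  (vz1 : v1 \in ends1 ez1) (zz1 : z1 \in ends1 ez1)
  (bx1 : ex1 \in bag1 i1) (by1 : ey1 \in bag1 i1) (bz1 : ez1 \in bag1 i1).
Hypotheses (vx2 : v2 \in ends2 ex2) (xx2 : x2 \in ends2 ex2)
  (vy2 : v2 \in ends2 ey2) (yy2 : y2 \in ends2 ey2)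
  (vz2 : v2 \in ends2 ez2) (zz2 : z2 \in ends2 ez2)
  (bx2 : ex2 \in bag2 i2) (by2 : ey2 \in bag2 i2) (bz2 : ez2 \in bag2 i2).

Let F1 := nbhd_facts nb1.
Let F2 := nbhd_facts nb2.

Lemma nv1 : [/\ v1 != x1, v1 != y1 & v1 != z1].
Proof. by case: F1 => a b c _; rewrite !adj_neq. Qed.
Lemma nv2 : [/\ v2 != x2, v2 != y2 & v2 != z2].
Proof. by case: F2 => a b c _; rewrite !adj_neq. Qed.

Lemma dist1 : [/\ ex1 != ey1, ey1 != ez1 & ex1 != ez1].
Proof.
case: F1 => _ _ _ [nxy nyz nxz]; case: nv1 => n1 n2 n3.
split; apply/eqP => E; subst.
- have := other (@h31 ey1) vy1 xx1 n1 yy1; rewrite eq_sym in n2; move/(_ n2) => E.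
  by rewrite E eqxx in nxy.
- have := other (@h31 ez1) vz1 yy1 n2 zz1; rewrite eq_sym in n3; move/(_ n3) => E.
  by rewrite E eqxx in nyz.
- have := other (@h31 ez1) vz1 xx1 n1 zz1; rewrite eq_sym in n3; move/(_ n3) => E.
  by rewrite E eqxx in nxz.
Qed.
Lemma dist2 : [/\ ex2 != ey2, ey2 != ez2 & ex2 != ez2].
Proof.
case: F2 => _ _ _ [nxy nyz nxz]; case: nv2 => n1 n2 n3.
split; apply/eqP => E; subst.
- have := other (@h32 ey2) vy2 xx2 n1 yy2; rewrite eq_sym in n2; move/(_ n2) => E.
  by rewrite E eqxx in nxy.
- have := other (@h32 ez2) vz2 yy2 n2 zz2; rewrite eq_sym in n3; move/(_ n3) => E.
  by rewrite E eqxx in nyz.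
- have := other (@h32 ez2) vz2 xx2 n1 zz2; rewrite eq_sym in n3; move/(_ n3) => E.
  by rewrite E eqxx in nxz.
Qed.

Definition h (f : E2) : option E1 :=
  if f == ex2 then Some ex1 else if f == ey2 then Some ey1
  else if f == ez2 then Some ez1 else None.
Definition g (f : E2) : E1 + E2 := if h f is Some e then inl e else inr f.
Definition cr (e : E1) (b : vtx G2) : bool :=
  [|| (e == ex1) && (b == x2), (e == ey1) && (b == y2) | (e == ez1) && (b == z2)].

Lemma hS f e : h f = Some e ->
  [\/ f = ex2 /\ e = ex1, f = ey2 /\ e = ey1 | f = ez2 /\ e = ez1].
Proof.
rewrite /h; case: eqP => [-> [<-]|_]; first by constructor 1.
case: eqP => [-> [<-]|_]; first by constructor 2.
by case: eqP => [-> [<-]|_] //; constructor 3.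
Qed.

Lemma hx : h ex2 = Some ex1. Proof. by rewrite /h eqxx. Qed.
Lemma hy : h ey2 = Some ey1.
Proof. by case: dist2 => a _ _; rewrite /h eq_sym (negPf a) eqxx. Qed.
Lemma hz : h ez2 = Some ez1.
Proof. by case: dist2 => _ b c; rewrite /h eq_sym (negPf c) eq_sym (negPf b) eqxx. Qed.

Lemma hbag f e : h f = Some e -> (e \in bag1 i1) && (f \in bag2 i2).
Proof. by case/hS => [[-> ->]|[-> ->]|[-> ->]]; apply/andP. Qed.

Lemma crbag e b : cr e b -> e \in bag1 i1.
Proof. by case/or3P => /andP [/eqP -> _]. Qed.

Lemma crS e b : cr e b -> exists f0, (h f0 == Some e) && (b \in ends2 f0).
Proof.
case/or3P => /andP [/eqP -> /eqP ->].
- by exists ex2; rewrite hx eqxx.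
- by exists ey2; rewrite hy eqxx.
- by exists ez2; rewrite hz eqxx.
Qed.

Lemma cr_uniq e b b' : cr e b -> cr e b' -> b = b'.
Proof.
case: dist1 => d1 d2 d3.
by case/or3P => /andP [/eqP -> /eqP ->]; case/or3P => /andP [/eqP E /eqP ->] //;
  move: d1 d2 d3; rewrite E eqxx // eq_sym => /negP.
Qed.

Lemma hcr f e b : h f = Some e -> b \in ends2 f -> b != v2 -> cr e b.
Proof.
case: nv2 => n1 n2 n3.
case/hS => [[-> ->]|[-> ->]|[-> ->]] hb nb; rewrite /cr eqxx /=.
- by rewrite (other (@h32 ex2) vx2 xx2 n1 hb nb) eqxx.
- by rewrite (other (@h32 ey2) vy2 yy2 n2 hb nb) eqxx ?orbT.
- by rewrite (other (@h32 ez2) vz2 zz2 n3 hb nb) eqxx ?orbT.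
Qed.

Lemma cr_ends1 e b a : cr e b -> a \in ends1 e -> a != v1 ->
  exists c, forall a', a' \in ends1 e -> a' != v1 -> a' = c.
Proof.
case: nv1 => n1 n2 n3.
case/or3P => /andP [/eqP -> _] _ _.
- by exists x1 => a' ha na; apply: other (@h31 ex1) vx1 xx1 n1 ha na.
- by exists y1 => a' ha na; apply: other (@h31 ey1) vy1 yy1 n2 ha na.
- by exists z1 => a' ha na; apply: other (@h31 ez1) vz1 zz1 n3 ha na.
Qed.


Local Notation BG := (bridge v1 v2 x1 y1 z1 x2 y2 z2).

Definition endsB (u : E1 + E2) : {set vtx BG} :=
  match u with
  | inl e => [set p : vtx BG | match p with inl a => val a \in ends1 e
                                            | inr b => cr e (val b) end]
  | inr f => [set p : vtx BG | match p with inl _ => false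
                   | inr b => (h f == None) && (val b \in ends2 f) end]
  end.

Definition bagB (k : I1 + I2) : {set E1 + E2} :=
  match k with inl i => inl @: bag1 i | inr j => g @: bag2 j end.

Lemma No3_cls (T : finType) (S : {set T}) (c : T -> bool) :
  (forall p q, p \in S -> q \in S -> c p = c q -> p = q) -> No3 S.
Proof.
move=> H a b d ha hb hd.
move: (H a b ha hb) (H b d hb hd) (H a d ha hd).
case: (c a); case: (c b); case: (c d) => Ea Eb Ec;
 first [by rewrite (Ea erefl) eqxx | by rewrite (Eb erefl) eqxx ?orbT
       | by rewrite (Ec erefl) eqxx ?orbT].
Qed.

Lemma No3_inj_in (T U : finType) (S : {set T}) (S' : {set U}) (f : T -> U) :
  {in S &, injective f} -> No3 S' -> (forall p, p \in S -> f p \in S') -> No3 S.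
Proof.
move=> inj h3 hS a b c ha hb hc.
have := h3 _ _ _ (hS a ha) (hS b hb) (hS c hc).
by rewrite !(inj_in_eq inj).
Qed.

Lemma No3B u : No3 (endsB u).
Proof.
case: u => [e|f].
  case: (boolP [exists b, cr e b]) => [/existsP [b0 hb0]|ncr].
    apply: (@No3_cls _ _ (fun p : vtx BG => if p is inl _ then true else false)).
    case=> [a|b] [a'|b'] //=; rewrite !inE /= => ha ha' _.
      have [c hc] := cr_ends1 hb0 ha (valP a).
      by congr inl; apply: val_inj; exact: (etrans (hc _ ha (valP a)) (esym (hc _ ha' (valP a')))).
    by congr inr; apply: val_inj; apply: cr_uniq ha ha'.
  apply: (@No3_inj_in _ _ _ (ends1 e)
            (fun p : vtx BG => if p is inl a then val a else v1)) => //.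
  - case=> [a|b] [a'|b'] //=; rewrite !inE /=.
    + by move=> _ _ E; congr inl; apply: val_inj.
    + by move=> _ hb' _; move: ncr; rewrite negb_exists => /forallP /(_ (val b')); rewrite hb'.
    + by move=> hb _ _; move: ncr; rewrite negb_exists => /forallP /(_ (val b)); rewrite hb.
    + by move=> hb _ _; move: ncr; rewrite negb_exists => /forallP /(_ (val b)); rewrite hb.
  - case=> [a|b]; rewrite inE //= => hb.
    by move: ncr; rewrite negb_exists => /forallP /(_ (val b)); rewrite hb.
apply: (@No3_inj_in _ _ _ (ends2 f)
          (fun p : vtx BG => if p is inr b then val b else v2)) => //.
- case=> [a|b] [a'|b'] //=; rewrite !inE //=.
  by move=> _ _ E; congr inr; apply: val_inj.
- by case=> [a|b]; rewrite inE //= => /andP [_ ->].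
Qed.

Lemma coverB (p : vtx BG) : exists u, p \in endsB u.
Proof.
case: p => [a|b].
  have [e he] := @hcov1 (val a); by exists (inl e); rewrite inE.
have [f hf] := @hcov2 (val b); case Ehf: (h f) => [e|].
  by exists (inl e); rewrite inE /=; exact: hcr Ehf hf (valP b).
by exists (inr f); rewrite inE /= Ehf hf.
Qed.

Lemma adjB p q : adj BG p q -> exists u, (p \in endsB u) && (q \in endsB u).
Proof.
case: p => [a|b]; case: q => [a'|b'] /=.
- by move=> /(@hadj1 _ _) [e he]; exists (inl e); rewrite !inE.
- case/or3P => /andP [/eqP Ea /eqP Eb].
  + by exists (inl ex1); rewrite !inE /= Ea xx1 /cr Eb !eqxx.
  + by exists (inl ey1); rewrite !inE /= Ea yy1 /cr Eb !eqxx ?orbT.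
  + by exists (inl ez1); rewrite !inE /= Ea zz1 /cr Eb !eqxx ?orbT.
- case/or3P => /andP [/eqP Ea /eqP Eb].
  + by exists (inl ex1); rewrite !inE /= Ea xx1 /cr Eb !eqxx.
  + by exists (inl ey1); rewrite !inE /= Ea yy1 /cr Eb !eqxx ?orbT.
  + by exists (inl ez1); rewrite !inE /= Ea zz1 /cr Eb !eqxx ?orbT.
- move=> hbb; have [f /andP [hf hf']] := @hadj2 _ _ hbb.
  case Ehf: (h f) => [e|].
    have c1 := hcr Ehf hf (valP b); have c2 := hcr Ehf hf' (valP b').
    by move: hbb; rewrite (cr_uniq c1 c2) adj_irr.
  by exists (inr f); rewrite !inE /= Ehf hf hf'.
Qed.

Lemma bll i e : (inl e \in bagB (inl i)) = (e \in bag1 i).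
Proof. by rewrite /= mem_imset //; move=> ? ? [->]. Qed.
Lemma blr i f : (inr f \in bagB (inl i)) = false.
Proof. by apply/negP => /imsetP [? _]. Qed.
Lemma gin j f : f \in bag2 j -> g f \in bagB (inr j).
Proof. by move=> hf; apply: imset_f. Qed.
Lemma g_inl f e : g f = inl e -> h f = Some e.
Proof. by rewrite /g; case: (h f) => // ? [->]. Qed.
Lemma g_inr f f' : g f = inr f' -> f' = f /\ h f = None.
Proof. by rewrite /g; case: (h f) => // [[->]]. Qed.
Lemma g_None f : h f = None -> g f = inr f.
Proof. by rewrite /g => ->. Qed.
Lemma g_Some f e : h f = Some e -> g f = inl e.
Proof. by rewrite /g => ->. Qed.

Lemma inter_lr e f b : cr e b -> h f = None -> b \in ends2 f ->
  exists k, (inl e \in bagB k) && (inr f \in bagB k).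
Proof.
move=> hc hN hb; have [f0 /andP [/eqP h0 hb0]] := crS hc.
have [j /andP [j0 jf]] := @hint2 _ _ _ hb0 hb.
exists (inr j); rewrite -(g_Some h0) -(g_None hN).
by rewrite !gin.
Qed.

Lemma interB u u' p : p \in endsB u -> p \in endsB u' ->
  exists k, (u \in bagB k) && (u' \in bagB k).
Proof.
case: u => [e|f]; case: u' => [e'|f']; case: p => [a|b]; rewrite !inE //=.
- move=> h1 h2; have [i /andP [hi hi']] := @hint1 _ _ _ h1 h2.
  by exists (inl i); rewrite !bll hi hi'.
- by move=> /crbag h1 /crbag h2; exists (inl i1); rewrite !bll h1 h2.
- by move=> hc /andP [/eqP hN hb]; apply: inter_lr hc hN hb.
- move=> /andP [/eqP hN hb] hc; have [k hk] := inter_lr hc hN hb.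
  by exists k; rewrite andbC.
- move=> /andP [/eqP hN hb] /andP [/eqP hN' hb'].
  have [j /andP [j1 j2]] := @hint2 _ _ _ hb hb'.
  by exists (inr j); rewrite -(g_None hN) -(g_None hN') !gin.
Qed.

Lemma sizeB k : #|bagB k| <= w.+1.
Proof.
case: k => [i|j] /=; apply: leq_trans (leq_imset_card _ _) _; [exact: hsz1 | exact: hsz2].
Qed.

Definition jB := jrel t1 t2 i1 i2.

Definition RelB u := [rel a b | [&& jB a b, u \in bagB a & u \in bagB b]].

Lemma RelB_sym u : symmetric (RelB u).
Proof.
have [_ js _ _ _] := join_tree i1 i2 ht1 ht2.
have js' : symmetric jB := js.
move=> a b; rewrite /RelB /= js'.
by case: (u \in bagB a); case: (u \in bagB b); rewrite ?andbF ?andbT.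
Qed.

Lemma L1 e i i' : e \in bag1 i -> e \in bag1 i' ->
    connect (RelB (inl e)) (inl i) (inl i').
Proof.
move=> hi hi'.
apply: (lift_conn (r := [rel a b | [&& t1 a b, e \in bag1 a & e \in bag1 b]])).
  by move=> a b /and3P [tab ha hb]; rewrite /RelB /= !bll tab ha hb.
exact: hconn1.
Qed.

Lemma L2 f u j j' : g f = u -> f \in bag2 j -> f \in bag2 j' ->
    connect (RelB u) (inr j) (inr j').
Proof.
move=> Eu hj hj'.
apply: (lift_conn (r := [rel a b | [&& t2 a b, f \in bag2 a & f \in bag2 b]])).
  by move=> a b /and3P [tab ha hb]; rewrite /RelB /= -Eu; apply/and3P; split; [exact: tab | exact: gin | exact: gin].
exact: hconn2.
Qed.

Lemma connB u k k' : u \in bagB k -> u \in bagB k' ->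
  connect [rel a b | [&& jB a b, u \in bagB a & u \in bagB b]] k k'.
Proof.
change (u \in bagB k -> u \in bagB k' -> connect (RelB u) k k').
case: u => [e|f].
  case: (boolP [exists f, h f == Some e]) => [/existsP [f0 /eqP hf0]|nh].
    have [be bf] := andP (hbag hf0).
    have hub : forall k, inl e \in bagB k -> connect (RelB (inl e)) k (inl i1).
      case=> [i|j].
        by rewrite bll => hi; apply: L1 hi be.
      move=> /imsetP [f hf Eg].
      have hf' : h f = Some e by apply: g_inl; rewrite -Eg.
      have [_ bf2] := andP (hbag hf').
      apply: connect_trans (L2 (esym Eg) hf bf2) (connect1 _).
      by rewrite /RelB /= !eqxx /= bll be andbT Eg gin.
    move=> hk hk'; apply: connect_trans (hub _ hk) _.
    by rewrite (sym_connect_sym (@RelB_sym _)); apply: hub.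
  have onlyl : forall k, inl e \in bagB k -> exists2 i, k = inl i & e \in bag1 i.
    case=> [i|j]; first by rewrite bll => hi; exists i.
    move=> /imsetP [f hf Eg]; exfalso; move/negP: nh; apply.
    by apply/existsP; exists f; rewrite (g_inl (esym Eg)).
  by move=> /onlyl [i -> hi] /onlyl [i' -> hi']; apply: L1 hi hi'.
have onlyr : forall k, inr f \in bagB k ->
    exists2 j, k = inr j & (f \in bag2 j) && (h f == None).
  case=> [i|j]; first by rewrite blr.
  move=> /imsetP [f' hf Eg]; have [Ef hN] := g_inr (esym Eg).
  by exists j => //; rewrite Ef hf hN.
move=> /onlyr [j -> /andP [hj /eqP hN]] /onlyr [j' -> /andP [hj' _]].
exact: L2 (g_None hN) hj hj'.
Qed.

Theorem bridge_Q : Q w BG set0.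
Proof.
apply: (@QI w BG set0 (I1 + I2)%type jB (E1 + E2)%type endsB bagB).
- exact: join_tree.
- exact: No3B.
- by move=> x _; apply: coverB.
- by move=> x e; rewrite inE.
- exact: adjB.
- exact: interB.
- exact: connB.
- exact: sizeB.
Qed.

End BridgeQ.


Lemma star (G : sgraph) (I E : finType) (t : rel I) (ends : E -> {set vtx G})
  (bag : I -> {set E}) v x y z :
  is_tree t ->
  (forall x y, adj G x y -> exists e, (x \in ends e) && (y \in ends e)) ->
  (forall e f x, x \in ends e -> x \in ends f -> exists i, (e \in bag i) && (f \in bag i)) ->
  (forall e i j, e \in bag i -> e \in bag j ->
       connect [rel a b | [&& t a b, e \in bag a & e \in bag b]] i j) ->
  nbhd3 v x y z ->
  exists ex ey ez i, [/\ v \in ends ex, x \in ends ex, v \in ends ey, y \in ends ey &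
     [/\ v \in ends ez, z \in ends ez, ex \in bag i, ey \in bag i & ez \in bag i]].
Proof.
move=> ht hadj hint hconn nb; case: (nbhd_facts nb) => ax ay az _.
have [ex /andP [vx xx]] := hadj _ _ ax.
have [ey /andP [vy yy]] := hadj _ _ ay.
have [ez /andP [vz zz]] := hadj _ _ az.
have [p /andP [p1 p2]] := hint _ _ _ vx vy.
have [q /andP [q1 q2]] := hint _ _ _ vx vz.
have [r /andP [r1 r2]] := hint _ _ _ vy vz.
have [c /and3P [c1 c2 c3]] := helly ht (A := fun i => ex \in bag i)
   (B := fun i => ey \in bag i) (C := fun i => ez \in bag i)
   (fun i j => @hconn ex i j) (fun i j => @hconn ey i j) (fun i j => @hconn ez i j)
   p1 p2 q1 q2 r1 r2.
by exists ex, ey, ez, c; split.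
Qed.

Lemma Q_bridge w G1 G2 (v1 : vtx G1) (v2 : vtx G2) x1 y1 z1 x2 y2 z2 :
  Q w G1 set0 -> Q w G2 set0 -> nbhd3 v1 x1 y1 z1 -> nbhd3 v2 x2 y2 z2 ->
  Q w (bridge v1 v2 x1 y1 z1 x2 y2 z2) set0.
Proof.
case=> I1 t1 E1 ends1 bag1 ht1 h31 hcov1 _ hadj1 hint1 hconn1 hsz1.
case=> I2 t2 E2 ends2 bag2 ht2 h32 hcov2 _ hadj2 hint2 hconn2 hsz2 nb1 nb2.
have [ex1 [ey1 [ez1 [i1 [a1 a2 a3 a4 [a5 a6 a7 a8 a9]]]]]] :=
  star ht1 hadj1 hint1 hconn1 nb1.
have [ex2 [ey2 [ez2 [i2 [b1 b2 b3 b4 [b5 b6 b7 b8 b9]]]]]] :=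
  star ht2 hadj2 hint2 hconn2 nb2.
apply: (bridge_Q nb1 nb2 ht1 h31 _ hadj1 hint1 hconn1 hsz1
                 ht2 h32 _ hadj2 hint2 hconn2 hsz2
                 a1 a2 a3 a4 a5 a6 a7 a8 a9 b1 b2 b3 b4 b5 b6 b7 b8 b9).
- by move=> x; apply: hcov1; rewrite inE.
- by move=> x; apply: hcov2; rewrite inE.
Qed.

Lemma Q_empty w G (X : {set vtx G}) : Q w G X -> Q w G set0.
Proof.
move: {2}#|X| (leqnn #|X|) => n; elim: n X => [|n IH] X.
  by rewrite leqn0 => /eqP /cards0_eq ->.
move=> hX HQ; case: (set_0Vmem X) => [E|[x xX]]; first by move: HQ; rewrite E.
apply: (IH (X :\ x)); last exact: Q_leaf HQ xX.
by rewrite (cardsD1 x X) xX in hX.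
Qed.

Unset Implicit Arguments.

Theorem theorem14 (w : nat) (B : sgraph -> Prop)
  (hB : forall H : sgraph, B H -> tw_le (line_graph H) w)
  (G : sgraph) (hG : bridge_closure B G) :
  tw_le G (2 * w + 1).
Proof.
apply: Q_tw.
elim: hG => [H /hB /Q_base /Q_empty //|] G1 G2 v1 v2 x1 y1 z1 x2 y2 z2 _ Q1 _ Q2 nb1 nb2.
exact: Q_bridge Q1 Q2 nb1 nb2.
Qed.
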